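(* If $H$ is a generalized hexagonal system, then $\zeta'(H,x)=\sum_{h}\zeta(H-h,x)$, where the sum runs over all hexagons $h$ of $H$ and $\zeta'$ denotes the derivative with respect to $x$.
   Context: A generalized hexagonal system is a subgraph of a hexagonal system (a 2-connected finite plane graph in which every interior face is a regular hexagon of side length one); its hexagons are the 6-cycles of it that bound hexagonal faces of the hexagonal lattice. A Clar cover of $H$ is a spanning subgraph each of whose components is a hexagon of $H$ or a single edge. $z(H,k)$ is the number of Clar covers of $H$ with exactly $k$ hexagon components and $\zeta(H,x)=\sum_{k\ge0}z(H,k)x^k$ (the empty graph has exactly one Clar cover, with $0$ hexagons). $H-h$ denotes the graph obtained from $H$ by deleting the vertices of $h$. *)

(* Defs.v *)
From HB Require Import structures.
From mathcomp Require Import all_boot all_order all_algebra.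
From mathcomp Require Import finmap.
Set Implicit Arguments. Unset Strict Implicit. Unset Printing Implicit Defensive.
Import GRing.Theory.
Local Open Scope fset_scope.

(* The hexagonal lattice is realised as the "brick wall" lattice:
   vertices are all points of Z^2; (x,y)-(x+1,y) is always an edge,
   (x,y)-(x,y+1) is an edge iff x+y is even.  Its faces are the bricks
   with lower-left corner (x,y), x+y even: 6-cycles on
   (x,y),(x+1,y),(x+2,y),(x+2,y+1),(x+1,y+1),(x,y+1). *)

Definition vert := (int * int)%type.

(* a lattice edge (x,y,b): horizontal from (x,y) if b, vertical from (x,y) else *)
Definition ledge := (int * int * bool)%type.

Definition src (e : ledge) : vert := (e.1.1, e.1.2).
Definition tgt (e : ledge) : vert :=
  if e.2 then ((e.1.1 + 1)%R, e.1.2) else (e.1.1, (e.1.2 + 1)%R).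

Definition even_pt (p : vert) : bool := ~~ odd (absz (p.1 + p.2)%R).

Definition valid_edge (e : ledge) : bool := e.2 || even_pt (src e).

Definition incident (v : vert) (e : ledge) : bool := (src e == v) || (tgt e == v).

Record graph := Graph { gV : {fset vert}; gE : {fset ledge} }.

(* H is a generalized hexagonal system: a (finite) subgraph of the hexagonal
   lattice (equivalently, of some hexagonal system). *)
Definition gen_hex_sys (G : graph) : Prop :=
  forall e, e \in gE G -> [/\ valid_edge e, src e \in gV G & tgt e \in gV G].

Definition hex_edges (p : vert) : seq ledge :=
  let: (x, y) := p in
  [:: (x, y, true); ((x + 1)%R, y, true); (x, (y + 1)%R, true);
      ((x + 1)%R, (y + 1)%R, true); (x, y, false); ((x + 2)%R, y, false)].

Definition hex_verts (p : vert) : seq vert :=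
  let: (x, y) := p in
  [:: (x, y); ((x + 1)%R, y); ((x + 2)%R, y);
      (x, (y + 1)%R); ((x + 1)%R, (y + 1)%R); ((x + 2)%R, (y + 1)%R)].

(* hexagons of G: lattice faces whose 6 boundary edges all belong to G,
   represented by their lower-left corner *)
Definition hexes (G : graph) : {fset vert} :=
  [fset p in [seq src e | e <- (gE G : seq ledge)]
     | even_pt p && all (fun e => e \in gE G) (hex_edges p)].

Definition del_hex (G : graph) (h : vert) : graph :=
  Graph [fset v in gV G | v \notin hex_verts h]
        [fset e in gE G | (src e \notin hex_verts h) && (tgt e \notin hex_verts h)].

(* For a spanning subgraph (V(G), F), F a set of edges of G: *)

(* the hexagon h of G is a connected component of (V(G),F) *)
Definition hex_comp (G : graph) (F : {fset ledge}) (h : vert) : bool :=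
  [&& h \in hexes G, all (fun e => e \in F) (hex_edges h) &
      all (fun e => has (fun v => incident v e) (hex_verts h) ==> (e \in hex_edges h))
          (F : seq ledge)].

(* the single edge e is a connected component of (V(G),F) *)
Definition edge_comp (F : {fset ledge}) (e : ledge) : bool :=
  (e \in F) &&
  all (fun e' => (incident (src e) e' || incident (tgt e) e') ==> (e' == e))
      (F : seq ledge).

(* Clar cover: spanning subgraph every component of which is a hexagon of G
   or a single edge (i.e. the component of every vertex is such) *)
Definition clar_cover (G : graph) (F : {fset ledge}) : bool :=
  (F `<=` gE G) &&
  all (fun v => has (fun h => hex_comp G F h && (v \in hex_verts h)) (hexes G : seq vert)
             || has (fun e => edge_comp F e && incident v e) (F : seq ledge))
      (gV G : seq vert).

Definition nhex (G : graph) (F : {fset ledge}) : nat :=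
  #|` [fset h in hexes G | hex_comp G F h]|.

Definition zcount (G : graph) (k : nat) : nat :=
  #|` [fset F in fpowerset (gE G) | clar_cover G F && (nhex G F == k)]|.

(* zeta(H,x) = sum_k z(H,k) x^k, written as the sum over all Clar covers F
   of x^(number of hexagon components of F) *)
Definition zeta (G : graph) : {poly int} :=
  (\sum_(F <- (fpowerset (gE G) : seq {fset ledge}) | clar_cover G F) 'X^(nhex G F))%R.

(* Main.v *)
Require Import Defs.
From HB Require Import structures.
From mathcomp Require Import all_boot all_order all_algebra.
From mathcomp Require Import finmap zify.
Import GRing.Theory.
Local Open Scope ring_scope.

Lemma incS (e : ledge) (u : vert) (S : seq vert) :
  (src e == u) || (tgt e == u) -> u \in S -> (src e \in S) || (tgt e \in S).
Proof. by case/orP=> /eqP ->  ->; rewrite ?orbT. Qed.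

Ltac splitall := repeat match goal with
 | H : is_true (_ || _) |- _ => case/orP: H => H
 | H : is_true (_ && _) |- _ => let H' := fresh H in case/andP: H => H H'
 end.

Lemma geo (a b c d : int) : even_pt (a,b) -> even_pt (c,d) ->
  (forall e, e \in hex_edges (a,b) ->
     (src e \in hex_verts (c,d)) || (tgt e \in hex_verts (c,d)) -> e \in hex_edges (c,d)) ->
  forall u, u \in hex_verts (a,b) -> u \in hex_verts (c,d) -> (a,b) = (c,d).
Proof.
move=> ea ec Hs u Hu Hu'.
have key : forall e1 e2, e1 \in hex_edges (a,b) -> e2 \in hex_edges (a,b) ->
   (src e1 == u) || (tgt e1 == u) -> (src e2 == u) || (tgt e2 == u) ->
   (e1 \in hex_edges (c,d) -> e2 \in hex_edges (c,d) -> (a,b) = (c,d)) -> (a,b) = (c,d).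
  move=> e1 e2 m1 m2 i1 i2; apply; apply: Hs => //; exact: incS Hu'.
move: ea ec; rewrite /even_pt /= => ea ec.
case: u Hu Hu' key => p q Hu Hu' key.
move: Hu; rewrite /= !inE !xpair_eqE => Hu; splitall.
- apply: (key (a,b,true) (a,b,false)); rewrite ?inE ?eqxx ?orbT //;
  try (rewrite /src /tgt /= !xpair_eqE; lia).
  rewrite ?inE ?xpair_eqE /= => I1 I2; splitall; apply/eqP; rewrite xpair_eqE; lia.
- apply: (key (a,b,true) (a+1,b,true)); rewrite ?inE ?eqxx ?orbT //;
  try (rewrite /src /tgt /= !xpair_eqE; lia).
  rewrite ?inE ?xpair_eqE /= => I1 I2; splitall; apply/eqP; rewrite xpair_eqE; lia.
- apply: (key (a+1,b,true) (a+2,b,false)); rewrite ?inE ?eqxx ?orbT //;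
  try (rewrite /src /tgt /= !xpair_eqE; lia).
  rewrite ?inE ?xpair_eqE /= => I1 I2; splitall; apply/eqP; rewrite xpair_eqE; lia.
- apply: (key (a,b+1,true) (a,b,false)); rewrite ?inE ?eqxx ?orbT //;
  try (rewrite /src /tgt /= !xpair_eqE; lia).
  rewrite ?inE ?xpair_eqE /= => I1 I2; splitall; apply/eqP; rewrite xpair_eqE; lia.
- apply: (key (a,b+1,true) (a+1,b+1,true)); rewrite ?inE ?eqxx ?orbT //;
  try (rewrite /src /tgt /= !xpair_eqE; lia).
  rewrite ?inE ?xpair_eqE /= => I1 I2; splitall; apply/eqP; rewrite xpair_eqE; lia.
- apply: (key (a+1,b+1,true) (a+2,b,false)); rewrite ?inE ?eqxx ?orbT //;
  try (rewrite /src /tgt /= !xpair_eqE; lia).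
  rewrite ?inE ?xpair_eqE /= => I1 I2; splitall; apply/eqP; rewrite xpair_eqE; lia.
Qed.

Local Open Scope fset_scope.

Lemma hasInc (e : ledge) (s : seq vert) :
  has (fun v => incident v e) s = (src e \in s) || (tgt e \in s).
Proof.
apply/hasP/orP => [[v vs /orP [/eqP E|/eqP E]]|[H|H]].
- by left; rewrite E.
- by right; rewrite E.
- by exists (src e) => //; rewrite /incident eqxx.
- by exists (tgt e) => //; rewrite /incident eqxx orbT.
Qed.

Lemma hexE (p : vert) (e : ledge) : e \in hex_edges p ->
  (src e \in hex_verts p) && (tgt e \in hex_verts p).
Proof.
case: p => x y; rewrite !inE => He; splitall; move/eqP: He => -> ;
  rewrite /src /tgt /= ?eqxx ?orbT ?andbT //= !xpair_eqE ?eqxx ?orbT ?andbT //=; lia.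
Qed.

Lemma hexV (p : vert) (v : vert) : v \in hex_verts p ->
  exists2 e, e \in hex_edges p & (src e == v) || (tgt e == v).
Proof.
case: p => x y; rewrite !inE => Hv; splitall; move/eqP: Hv => ->.
- by exists (x,y,true); rewrite ?inE ?eqxx.
- by exists (x,y,true); rewrite ?inE ?eqxx ?orbT.
- by exists ((x+2)%R,y,false); rewrite ?inE ?eqxx ?orbT.
- by exists (x,(y+1)%R,true); rewrite ?inE ?eqxx ?orbT.
- by exists ((x+1)%R,(y+1)%R,true); rewrite ?inE ?eqxx ?orbT.
- by exists ((x+2)%R,y,false); rewrite ?inE ?eqxx ?orbT.
Qed.

Lemma in_hexes (G : graph) (p : vert) :
  (p \in hexes G) = even_pt p && all (fun e => e \in gE G) (hex_edges p).
Proof.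
rewrite /hexes !inE /=.
case E: (even_pt p && all (fun e => e \in gE G) (hex_edges p)); rewrite ?andbF ?andbT //.
case/andP: E => _; case: p => x y /= /andP [H1 _].
by apply/mapP; exists (x,y,true).
Qed.

Lemma hex_compP (G : graph) (F : {fset ledge}) (p : vert) :
  reflect [/\ p \in hexes G, {subset hex_edges p <= F} &
     forall e, e \in F -> (src e \in hex_verts p) || (tgt e \in hex_verts p) -> e \in hex_edges p]
  (hex_comp G F p).
Proof.
rewrite /hex_comp; apply: (iffP and3P) => [[h1 /allP h2 /allP h3]|[h1 h2 h3]]; split => //.
- move=> e eF; have:= h3 e eF; rewrite hasInc => /implyP; exact.
- by apply/allP => e; exact: h2.
- by apply/allP => e eF; rewrite hasInc; apply/implyP; exact: h3.
Qed.

Lemma edge_compP (F : {fset ledge}) (e : ledge) :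
  reflect (e \in F /\ forall e', e' \in F -> incident (src e) e' || incident (tgt e) e' -> e' = e)
  (edge_comp F e).
Proof.
apply: (iffP andP) => [[h1 /allP h2]|[h1 h2]]; split => //.
- by move=> e' e'F inc; apply/eqP; exact: (implyP (h2 e' e'F)).
- by apply/allP=> e' e'F; apply/implyP => inc; apply/eqP; exact: h2.
Qed.

Lemma clar_coverP (G : graph) (F : {fset ledge}) :
  reflect (F `<=` gE G /\ forall v, v \in gV G ->
     (exists2 p, p \in hexes G & hex_comp G F p && (v \in hex_verts p)) \/
     (exists2 e, e \in F & edge_comp F e && incident v e))
  (clar_cover G F).
Proof.
apply: (iffP andP) => [[h1 /allP h2]|[h1 h2]]; split => //.
- by move=> v vV; case/orP: (h2 v vV) => /hasP H; [left|right].
- apply/allP => v vV; apply/orP; case: (h2 v vV) => H; [left|right]; exact/hasP.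
Qed.

Lemma del_E (H : graph) (h : vert) (e : ledge) : (e \in gE (del_hex H h)) =
  [&& e \in gE H, src e \notin hex_verts h & tgt e \notin hex_verts h].
Proof. by rewrite /del_hex !inE /=; case: (e \in gE H); rewrite ?andbT ?andbF. Qed.

Lemma del_V (H : graph) (h : vert) (v : vert) : (v \in gV (del_hex H h)) =
  (v \in gV H) && (v \notin hex_verts h).
Proof. by rewrite /del_hex !inE /= andbC. Qed.

Lemma comp_hexes (G : graph) (F : {fset ledge}) (p : vert) :
  hex_comp G F p -> p \in hexes G.
Proof. by case/and3P. Qed.

Lemma hexes_del (H : graph) (h p : vert) : p \in hexes (del_hex H h) ->
  p \in hexes H /\ (forall v, v \in hex_verts p -> v \notin hex_verts h).
Proof.
rewrite !in_hexes => /andP [ep /allP al]; split.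
- rewrite ep /=; apply/allP => e /al; rewrite del_E; by case/and3P.
- move=> v /hexV [e he /orP [/eqP<- | /eqP<-]]; have:= al e he; rewrite del_E;
  by case/and3P.
Qed.

Arguments hexE {p e}.
Arguments hexV {p v}.
Arguments hexes_del {H h p}.
Arguments comp_hexes {G F p}.

Definition HE (h : vert) : {fset ledge} := seq_fset tt (hex_edges h).

Lemma inHE h e : (e \in HE h) = (e \in hex_edges h).
Proof. by rewrite /HE seq_fsetE. Qed.

Lemma comp_del (H : graph) (h : vert) (F : {fset ledge}) (p : vert) :
  hex_comp H F h -> p != h -> hex_comp H F p ->
  hex_comp (del_hex H h) (F `\` HE h) p.
Proof.
move=> /hex_compP [hH hsub hcl] nph /hex_compP [pH psub pcl].
have avw : forall w, w \in hex_verts p -> w \notin hex_verts h.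
  move=> w wp; apply/negP => wh; move/negP: nph; apply; apply/eqP.
  move: hH pH hsub hcl psub pcl wp wh; case: h => a b; case: p => c d.
  rewrite !in_hexes => /andP [ea _] /andP [ec _] hsub hcl psub pcl wp wh.
  symmetry; apply: (@geo a b c d ea ec _ _ wh wp) => e eh T; exact: pcl (hsub e eh) T.
have av : forall e, e \in hex_edges p -> (src e \notin hex_verts h) && (tgt e \notin hex_verts h).
  by move=> e /hexE /andP [s t]; rewrite !avw.
apply/hex_compP; split.
- move: pH; rewrite !in_hexes => /andP [-> /allP al] /=; apply/allP => e ep.
  rewrite del_E al //=; exact: av.
- move=> e ep; rewrite in_fsetD inHE psub // andbT; apply/negP => eh.
  by case/andP: (hexE eh) => s _; case/andP: (av e ep); rewrite s.
- move=> e; rewrite in_fsetD => /andP [_ eF]; exact: pcl.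
Qed.

Lemma comp_up (H : graph) (h : vert) (F' : {fset ledge}) (p : vert) :
  hex_comp (del_hex H h) F' p -> hex_comp H (F' `|` HE h) p.
Proof.
move=> /hex_compP [pD psub pcl]; have [pH pav] := hexes_del pD.
apply/hex_compP; split => //.
- by move=> e /psub; rewrite in_fsetU => ->.
- move=> e; rewrite in_fsetU inHE => /orP [eF|eh] T; first exact: pcl.
  case/andP: (hexE eh) => s t; exfalso.
  by case/orP: T => w; [move: (pav _ w); rewrite s | move: (pav _ w); rewrite t].
Qed.

Lemma comp_h (H : graph) (h : vert) (F' : {fset ledge}) :
  h \in hexes H -> F' `<=` gE (del_hex H h) -> hex_comp H (F' `|` HE h) h.
Proof.
move=> hH sub; apply/hex_compP; split => //.
- by move=> e eh; rewrite in_fsetU inHE eh orbT.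
- move=> e; rewrite in_fsetU inHE => /orP [eF|//] T; exfalso.
  have := fsubsetP sub e eF; rewrite del_E => /and3P [_ s t].
  by case/orP: T => w; [rewrite w in s | rewrite w in t].
Qed.

Lemma sub_up (H : graph) (h : vert) (F' : {fset ledge}) :
  h \in hexes H -> F' `<=` gE (del_hex H h) -> F' `|` HE h `<=` gE H.
Proof.
move=> hH sub; apply/fsubsetP => e; rewrite in_fsetU inHE => /orP [eF|eh].
- by have := fsubsetP sub e eF; rewrite del_E => /and3P [].
- by move: hH; rewrite in_hexes => /andP [_ /allP]; apply.
Qed.

Lemma HE_disj (H : graph) (h : vert) (F' : {fset ledge}) :
  F' `<=` gE (del_hex H h) -> (F' `|` HE h) `\` HE h = F'.
Proof.
move=> sub; apply/fsetP => e; rewrite in_fsetD in_fsetU inHE.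
case eh: (e \in hex_edges h); rewrite /= ?orbF //.
apply/esym/negbTE/negP => eF.
have := fsubsetP sub e eF; rewrite del_E; case/andP: (hexE eh) => s _.
by rewrite s /= andbF.
Qed.

Arguments comp_del {H h F p}.
Arguments comp_up {H h F' p}.
Arguments comp_h {H h F'}.
Arguments sub_up {H h F'}.
Arguments HE_disj {H h F'}.

Lemma cover_up (H : graph) (h : vert) (F' : {fset ledge}) :
  h \in hexes H -> clar_cover (del_hex H h) F' -> clar_cover H (F' `|` HE h).
Proof.
move=> hH /clar_coverP [sub cov]; apply/clar_coverP; split; first exact: sub_up.
move=> v vH; case vh: (v \in hex_verts h).
  by left; exists h => //; rewrite comp_h.
have vD : v \in gV (del_hex H h) by rewrite del_V vH vh.
case: (cov v vD) => [[p pD /andP [pc vp]] | [e eF /andP [ec ve]]].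
- left; exists p; first by case: (hexes_del pD).
  by rewrite comp_up.
- right; exists e; first by rewrite in_fsetU eF.
  rewrite ve andbT; apply/edge_compP; split; first by rewrite in_fsetU eF.
  move=> e'; rewrite in_fsetU inHE => /orP [e'F|e'h] inc.
    by case/edge_compP: ec => _; apply.
  have [s' t'] := andP (hexE e'h).
  have := fsubsetP sub e eF; rewrite del_E => /and3P [_ s t].
  by case/orP: inc => /orP [] /eqP E;
    [move: s; rewrite -E s' | move: s; rewrite -E t' | move: t; rewrite -E s'
    | move: t; rewrite -E t'].
Qed.

Lemma cover_down (H : graph) (h : vert) (F : {fset ledge}) :
  clar_cover H F -> hex_comp H F h -> clar_cover (del_hex H h) (F `\` HE h).
Proof.
move=> /clar_coverP [sub cov] hc; have hc' := hc; move/hex_compP: hc' => [hH hsub hcl].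
apply/clar_coverP; split.
- apply/fsubsetP => e; rewrite in_fsetD inHE => /andP [neh eF].
  rewrite del_E (fsubsetP sub e eF) /=.
  by apply/andP; split; apply/negP => w; move/negP: neh; apply; apply: hcl => //;
    rewrite w ?orbT.
- move=> v; rewrite del_V => /andP [vH vh].
  case: (cov v vH) => [[p pH /andP [pc vp]] | [e eF /andP [ec ve]]].
  + have pd : p != h by apply/eqP => E; rewrite -E vp in vh.
    have c := comp_del hc pd pc.
    by left; exists p; [exact: comp_hexes c | rewrite c vp].
  + have neh : e \notin hex_edges h.
      apply/negP => eh; have [s t] := andP (hexE eh).
      by case/orP: ve => /eqP E; move: vh; rewrite -E ?s ?t.
    have eF' : e \in F `\` HE h by rewrite in_fsetD inHE neh.
    right; exists e => //; rewrite ve andbT; apply/edge_compP; split => //.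
    move=> e'; rewrite in_fsetD => /andP [_ e'F]; case/edge_compP: ec => _; exact.
Qed.

Lemma in_sep (T : choiceType) (A : {fset T}) (P : pred T) x :
  (x \in [fset y in A | P y]) = (x \in A) && P x.
Proof. by rewrite inE. Qed.

Lemma nhex_up (H : graph) (h : vert) (F' : {fset ledge}) :
  h \in hexes H -> F' `<=` gE (del_hex H h) ->
  nhex H (F' `|` HE h) = (nhex (del_hex H h) F').+1.
Proof.
move=> hH sub; rewrite /nhex.
have -> : [fset p in hexes H | hex_comp H (F' `|` HE h) p] =
          h |` [fset p in hexes (del_hex H h) | hex_comp (del_hex H h) F' p].
  apply/fsetP => p; rewrite in_fset1U !in_sep.
  case: (p =P h) => [->|/eqP nph] /=; first by rewrite hH comp_h.
  apply/andP/andP => [[pH pc]|[pD pc]].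
    have := comp_del (comp_h hH sub) nph pc; rewrite (HE_disj sub) => c.
    by split => //; exact: comp_hexes c.
  by split; [case: (hexes_del pD) | exact: comp_up].
rewrite cardfsU1 in_sep.
have -> : h \in hexes (del_hex H h) = false.
  apply/negP => /hexes_del [_]; case: h {hH sub} => x y /(_ (x,y)).
  by rewrite !inE eqxx /= => /(_ isT).
by [].
Qed.

Arguments cover_down {H h F}.
Arguments cover_up {H h F'}.

Lemma reindex (H : graph) (h : vert) : h \in hexes H ->
  (\sum_(F <- (fpowerset (gE H) : seq {fset ledge}) | clar_cover H F && hex_comp H F h)
      'X^((nhex H F).-1))%R = zeta (del_hex H h).
Proof.
move=> hH; rewrite /zeta -big_filter -[in RHS]big_filter.
rewrite [in RHS](eq_big_seq (fun F' => 'X^((nhex H (F' `|` HE h)).-1))); last first.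
  move=> F'; rewrite mem_filter => /andP [/clar_coverP [sub _] _].
  by rewrite nhex_up.
rewrite -(big_map (fun F' => F' `|` HE h) xpredT (fun F => 'X^((nhex H F).-1))).
apply: perm_big; apply: uniq_perm.
- exact: filter_uniq (fset_uniq _).
- rewrite map_inj_in_uniq; first exact: filter_uniq (fset_uniq _).
  move=> F1 F2; rewrite !mem_filter => /andP [/clar_coverP [s1 _] _] /andP [/clar_coverP [s2 _] _] E.
  by rewrite -(HE_disj s1) E (HE_disj s2).
- move=> F; rewrite mem_filter; apply/andP/mapP.
  + move=> [/andP [cov hc] Fs]; exists (F `\` HE h).
      rewrite mem_filter cover_down //=.
      by case/clar_coverP: (cover_down cov hc) => sub _; rewrite fpowersetE.
    case/hex_compP: hc => _ hsub _.
    apply/fsetP => e; rewrite in_fsetU in_fsetD inHE.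
    by case eh: (e \in hex_edges h); rewrite /= ?orbT ?orbF // hsub.
  + move=> [F' F'in ->]; move: F'in; rewrite mem_filter => /andP [c _].
    have [sub _] := clar_coverP _ _ c.
    by rewrite cover_up // comp_h // fpowersetE sub_up.
Qed.

Lemma sum_const_count (T : Type) (r : seq T) (P : pred T) (c : {poly int}) :
  (\sum_(p <- r | P p) c)%R = (c *+ count P r)%R.
Proof.
elim: r => [|x r IH]; first by rewrite big_nil.
by rewrite big_cons IH /=; case: (P x); rewrite ?mulrS.
Qed.

Lemma nhex_count (G : graph) (F : {fset ledge}) :
  nhex G F = count (hex_comp G F) (hexes G).
Proof.
by rewrite /nhex card_fset_sum1 -big_fset_condE sum1_count.
Qed.

Theorem theorem4 (H : graph) :
  gen_hex_sys H ->
  deriv (zeta H) = (\sum_(h <- (hexes H : seq vert)) zeta (del_hex H h))%R.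
Proof.
move=> _; rewrite /zeta raddf_sum.
rewrite (eq_bigr (fun F => \sum_(p <- (hexes H : seq vert) | hex_comp H F p)
            'X^((nhex H F).-1))%R); last first.
  by move=> F _; rewrite /= derivXn sum_const_count nhex_count.
under eq_bigr => F _ do rewrite big_mkcond.
rewrite exchange_big /=.
apply: eq_big_seq => p pH; rewrite -big_mkcondr; exact: reindex.
Qed.
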